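(* The eventually different forcing $\mathbb E$ is a union of countably many subsets each of which is centered and closed-uf-lim-linked; i.e., $\mathbb E$ is $\sigma$-$(\Lambda(\mathrm{centered})\cap\Lambda^{\lim}_{\mathrm{cuf}})$-linked.
   Context: $\mathbb E$ consists of triples $(s,k,\varphi)$ with $s\in\omega^{<\omega}$, $k<\omega$ and $\varphi:\omega\to[\omega]^{\leq k}$, ordered by $(s',k',\varphi')\leq(s,k,\varphi)$ iff $s'\supseteq s$, $k'\geq k$, $\varphi'(i)\supseteq\varphi(i)$ for all $i$, and $s'(i)\notin\varphi(i)$ for all $i\in\mathrm{dom}(s')\setminus\mathrm{dom}(s)$. For a poset $\mathbb P$ and $Q\subseteq\mathbb P$, $Q$ is closed-uf-lim-linked if for every non-principal ultrafilter $D$ on $\omega$ there are $\lim^D:Q^\omega\to Q$ and a $\mathbb P$-name $\dot D'$ of an ultrafilter extending $D$ such that for all $\bar q=\langle q_m\rangle\in Q^\omega$, $\lim^D\bar q\Vdash\{m:q_m\in\dot G\}\in\dot D'$. *)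

(* Defs.v *)
(* forcing is formalized via weak (Cohen)
   forcing over the ambient universe, with nice names. *)
From mathcomp Require Import all_boot.
From mathcomp Require Import finmap.
Set Implicit Arguments. Unset Strict Implicit. Unset Printing Implicit Defensive.
Local Open Scope fset_scope.

Definition ultrafilter (D : (nat -> Prop) -> Prop) : Prop :=
  D (fun _ => True) /\ ~ D (fun _ => False) /\
  (forall x y, D x -> (forall n, x n -> y n) -> D y) /\
  (forall x y, D x -> D y -> D (fun n => x n /\ y n)) /\
  (forall x, D x \/ D (fun n => ~ x n)).

Definition nonprincipal_ultrafilter (D : (nat -> Prop) -> Prop) : Prop :=
  ultrafilter D /\ forall k, ~ D (fun n => n = k).

(* Generic forcing notions for a preorder (P, le), le q p meaning q <= p
   (q is stronger than p).                                            *)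
Section Forcing.
Variable P : Type.
Variable le : P -> P -> Prop.

Definition dense_below (U : P -> Prop) (p : P) : Prop :=
  forall q, le q p -> exists r, le r q /\ U r.

(* A nice P-name for a subset of omega:  A n is the set of conditions a
   such that (n-check, a) belongs to the name. *)
Definition sname := nat -> P -> Prop.

Definition forces_in (A : sname) (n : nat) (p : P) : Prop :=
  dense_below (fun r => exists a, A n a /\ le r a) p.

Definition forces_eq (A B : sname) (p : P) : Prop :=
  forall n r, le r p -> (forces_in A n r <-> forces_in B n r).

Definition forces_sub (A B : sname) (p : P) : Prop :=
  forall n r, le r p -> forces_in A n r -> forces_in B n r.

Definition forces_inter (C A B : sname) (p : P) : Prop :=
  forall n r, le r p -> (forces_in C n r <-> (forces_in A n r /\ forces_in B n r)).

Definition forces_compl (C A : sname) (p : P) : Prop :=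
  forall n r, le r p ->
    (forces_in C n r <-> ~ exists r', le r' r /\ forces_in A n r').

Definition check_name (x : nat -> Prop) : sname := fun n _ => x n.

(* A nice P-name for a set of subsets of omega: pairs (A, a) of a name
   A for a subset of omega and a condition a. *)
Definition fname := sname -> P -> Prop.

Definition forces_mem (Dn : fname) (B : sname) (p : P) : Prop :=
  dense_below (fun r => exists A a, Dn A a /\ le r a /\ forces_eq A B r) p.

Definition forced_uf_extending (D : (nat -> Prop) -> Prop) (Dn : fname) : Prop :=
  (forall x, D x -> forall p, forces_mem Dn (check_name x) p) /\
  (forall p, ~ forces_mem Dn (check_name (fun _ => False)) p) /\
  (forall A B p, forces_mem Dn A p -> forces_sub A B p -> forces_mem Dn B p) /\
  (forall A B C p, forces_inter C A B p ->
      forces_mem Dn A p -> forces_mem Dn B p -> forces_mem Dn C p) /\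
  (forall A C p, forces_compl C A p ->
      dense_below (fun r => forces_mem Dn A r \/ forces_mem Dn C r) p).

(* The name for {m | q_m \in G} *)
Definition generic_hits (qs : nat -> P) : sname := fun m a => a = qs m.

Definition centered (Q : P -> Prop) : Prop :=
  forall (n : nat) (F : nat -> P), (forall i, (i < n)%N -> Q (F i)) ->
    exists r, forall i, (i < n)%N -> le r (F i).

Definition closed_uf_lim_linked (Q : P -> Prop) : Prop :=
  forall D, nonprincipal_ultrafilter D ->
    exists (lim : (nat -> P) -> P) (Dn : fname),
      (forall qs, (forall m, Q (qs m)) -> Q (lim qs)) /\
      forced_uf_extending D Dn /\
      (forall qs, (forall m, Q (qs m)) -> forces_mem Dn (generic_hits qs) (lim qs)).
End Forcing.

Record Econd := MkE {
  E_s : seq nat;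
  E_k : nat;
  E_phi : nat -> {fset nat};
  E_phiP : forall i, (#|` E_phi i| <= E_k)%N }.

Definition E_le (p' p : Econd) : Prop :=
  prefix (E_s p) (E_s p') /\ (E_k p <= E_k p')%N /\
  (forall i, E_phi p i `<=` E_phi p' i) /\
  (forall i, (size (E_s p) <= i < size (E_s p'))%N ->
     nth 0%N (E_s p') i \notin E_phi p i).

(* Main.v *)
Require Import Defs.
From mathcomp Require Import all_boot finmap.
From mathcomp Require boolp classical_sets.
Set Implicit Arguments. Unset Strict Implicit. Unset Printing Implicit Defensive.

Section Abs.
Variables (P : Type) (le : P -> P -> Prop).
Hypothesis le_refl : forall p, le p p.
Hypothesis le_trans : forall p q r, le p q -> le q r -> le p r.

Lemma dense_mono U p q : dense_below le U p -> le q p -> dense_below le U q.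
Proof. move=> H Hq r Hr; exact: H (le_trans Hr Hq). Qed.

Lemma fin_mono A n p q : forces_in le A n p -> le q p -> forces_in le A n q.
Proof. exact: dense_mono. Qed.

Lemma fin_dense A n p : dense_below le (forces_in le A n) p -> forces_in le A n p.
Proof.
move=> H q Hq; case: (H q Hq) => r [Hrq Hr].
case: (Hr r (le_refl r)) => r' [Hr'r W]; exists r'; split=> //; exact: le_trans Hr'r Hrq.
Qed.

Lemma fmem_mono Dn A p q : forces_mem le Dn A p -> le q p -> forces_mem le Dn A q.
Proof. exact: dense_mono. Qed.

Lemma fmem_dense Dn A p : dense_below le (forces_mem le Dn A) p -> forces_mem le Dn A p.
Proof.
move=> H q Hq; case: (H q Hq) => r [Hrq Hr].
case: (Hr r (le_refl r)) => r' [Hr'r W]; exists r'; split=> //; exact: le_trans Hr'r Hrq.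
Qed.

Lemma fmem_witness Dn A B a r :
  Dn A a -> le r a -> forces_eq le A B r -> forces_mem le Dn B r.
Proof.
move=> HA Hra Heq q Hq; exists q; split; first exact: le_refl.
exists A, a; split=> //; split; first exact: le_trans Hq Hra.
move=> n r' Hr'; apply: Heq; exact: le_trans Hr' Hq.
Qed.

Lemma feq_refl A r : forces_eq le A A r.
Proof. by []. Qed.

Lemma fmem_of_pair Dn A a r : Dn A a -> le r a -> forces_mem le Dn A r.
Proof. move=> H1 H2; exact: fmem_witness H1 H2 (@feq_refl A r). Qed.

Lemma fmem_incl (Dn Dn' : fname P) A p :
  (forall B a, Dn B a -> Dn' B a) -> forces_mem le Dn A p -> forces_mem le Dn' A p.
Proof.
move=> Hi H q Hq; case: (H q Hq) => r [Hrq [B [a [HB Hr]]]].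
exists r; split=> //; exists B, a; split=> //; exact: Hi.
Qed.

Lemma fin_check x n p : forces_in le (check_name x) n p <-> x n.
Proof.
split.
- move=> H; case: (H p (le_refl p)) => r [_ [a [Ha _]]]; exact: Ha.
- move=> Hx q Hq; exists q; split; first exact: le_refl.
  exists q; split=> //; exact: le_refl.
Qed.

Lemma fin_false n p : ~ forces_in le (check_name (fun _ => False)) n p.
Proof. by move/fin_check. Qed.

Lemma fin_hits (qs : nat -> P) m r : le r (qs m) -> forces_in le (generic_hits qs) m r.
Proof.
move=> H q Hq; exists q; split; first exact: le_refl.
exists (qs m); split=> //; exact: le_trans Hq H.
Qed.

Definition inter_name (X Y : sname P) : sname P :=
  fun n a => exists x y, X n x /\ Y n y /\ le a x /\ le a y.

Lemma fin_inter X Y n p :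
  forces_in le (inter_name X Y) n p <-> forces_in le X n p /\ forces_in le Y n p.
Proof.
split.
- move=> H; split=> q Hq; case: (H q Hq) => r [Hrq [a [[x [y [Hx [Hy [Hax Hay]]]]] Hra]]];
  exists r; split=> //.
  + exists x; split=> //; exact: le_trans Hra Hax.
  + exists y; split=> //; exact: le_trans Hra Hay.
- case=> HX HY q Hq; case: (HX q Hq) => r1 [Hr1 [x [Hx Hr1x]]].
  case: (HY r1 (le_trans Hr1 Hq)) => r2 [Hr2 [y [Hy Hr2y]]].
  exists r2; split; first exact: le_trans Hr2 Hr1.
  exists r2; split; last exact: le_refl.
  exists x, y; do 2 split=> //; split=> //; exact: le_trans Hr2 Hr1x.
Qed.

Lemma finter_inter X Y p : forces_inter le (inter_name X Y) X Y p.
Proof. move=> n r _; exact: fin_inter. Qed.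

Variable D : (nat -> Prop) -> Prop.
Variable Q : P -> Prop.
Variable lim : (nat -> P) -> P.

Definition good (Dn : fname P) : Prop :=
  (forall x, D x -> forall p, forces_mem le Dn (check_name x) p) /\
  (forall p, ~ forces_mem le Dn (check_name (fun _ => False)) p) /\
  (forall A B p, forces_mem le Dn A p -> forces_sub le A B p -> forces_mem le Dn B p) /\
  (forall A B C p, forces_inter le C A B p ->
      forces_mem le Dn A p -> forces_mem le Dn B p -> forces_mem le Dn C p) /\
  (forall qs, (forall m, Q (qs m)) -> forces_mem le Dn (generic_hits qs) (lim qs)).


Section Ext.
Variables (Dm : fname P) (A C : sname P) (p q : P).
Hypothesis gDm : good Dm.
Hypothesis HC : forces_compl le C A p.
Hypothesis Hqp : le q p.
Hypothesis Hno : forall r, le r q -> ~ (forces_mem le Dm A r \/ forces_mem le Dm C r).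

Definition Ext (B : sname P) (r : P) : Prop :=
  le r q /\ exists A2, forces_mem le Dm A2 r /\
    (forall n r', le r' r -> forces_in le A n r' -> forces_in le A2 n r' -> forces_in le B n r').

Definition Dm' : fname P := fun B r => Dm B r \/ Ext B r.

Definition W B r := forces_mem le Dm B r \/ Ext B r.

Lemma W_mono B r r' : W B r -> le r' r -> W B r'.
Proof.
move=> [H|[H1 [A2 [H2 H3]]]] Hr; [left; exact: fmem_mono H Hr|right].
split; first exact: le_trans Hr H1.
exists A2; split; first exact: fmem_mono H2 Hr.
move=> n r'' Hr''; apply: H3; exact: le_trans Hr'' Hr.
Qed.

Lemma Dm'_W B p0 : forces_mem le Dm' B p0 -> dense_below le (W B) p0.
Proof.
move=> H q0 Hq0; case: (H q0 Hq0) => r [Hrq0 [B' [a [[HB'|HB'] [Hra Heq]]]]].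
- exists r; split=> //; left; exact: fmem_witness HB' Hra Heq.
- exists r; split=> //; right; case: HB' => H1 [A2 [H2 H3]].
  split; first exact: le_trans Hra H1.
  exists A2; split; first exact: fmem_mono H2 Hra.
  move=> n r' Hr' HA HA2; apply/(Heq n r' Hr'); apply: H3 => //; exact: le_trans Hr' Hra.
Qed.

Lemma W_Dm' B p0 : dense_below le (W B) p0 -> forces_mem le Dm' B p0.
Proof.
move=> H q0 Hq0; case: (H q0 Hq0) => r [Hrq0 [HW|HW]].
- case: (HW r (le_refl r)) => r' [Hr'r [B' [a [HB' [Hr'a Heq]]]]].
  exists r'; split; first exact: le_trans Hr'r Hrq0.
  exists B', a; split; [by left|by split].
- exists r; split=> //; exists B, r; split; [by right|split; [exact: le_refl|exact: feq_refl]].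
Qed.

Lemma good_Dm' : good Dm'.
Proof.
case: gDm => [ga [gb [gc [gd ge]]]].
have incl : forall B a, Dm B a -> Dm' B a by move=> B a H; left.
split; [|split; [|split; [|split]]].
- move=> x Hx p0; exact: fmem_incl incl (ga x Hx p0).
- move=> p0 /Dm'_W H; case: (H p0 (le_refl p0)) => r [Hrp0 [HW|[H1 [A2 [H2 H3]]]]].
  + exact: gb HW.
  + apply: (Hno H1); right; apply: gc H2 _ => n r' Hr' HA2.
    have Hr'p : le r' p by apply: le_trans Hr' (le_trans H1 Hqp).
    have HH := @HC n r' Hr'p.
  apply (proj2 HH); move=> [r'' [Hr'' HA]].
    apply: (@fin_false n r''); apply: H3 => //; first exact: le_trans Hr'' Hr'.
    exact: fin_mono HA2 Hr''.
- move=> B B2 p0 /Dm'_W H Hsub; apply: W_Dm' => q0 Hq0.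
  case: (H q0 Hq0) => r [Hrq0 [HW|[H1 [A2 [H2 H3]]]]]; exists r; split=> //.
  + left; apply: gc HW _ => n r' Hr'; apply: Hsub; exact: le_trans Hr' (le_trans Hrq0 Hq0).
  + right; split=> //; exists A2; split=> // n r' Hr' HA HA2.
    apply: (Hsub n r'); first exact: le_trans Hr' (le_trans Hrq0 Hq0).
    exact: H3.
- move=> B1 B2 C' p0 Hint /Dm'_W H1 /Dm'_W H2; apply: W_Dm' => q0 Hq0.
  case: (H1 q0 Hq0) => r1 [Hr1 W1].
  case: (H2 r1 (le_trans Hr1 Hq0)) => r2 [Hr2 W2].
  have {}W1 := W_mono W1 Hr2.
  have Hr2p0 : le r2 p0 by apply: le_trans Hr2 (le_trans Hr1 Hq0).
  exists r2; split; first exact: le_trans Hr2 Hr1.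
  have Hint2 : forall n r', le r' r2 -> (forces_in le C' n r' <-> forces_in le B1 n r' /\ forces_in le B2 n r').
    move=> n r' Hr'; apply: Hint; exact: le_trans Hr' Hr2p0.
  case: W1 => [M1|[E1 [A1 [F1 S1]]]]; case: W2 => [M2|[E2 [A2 [F2 S2]]]].
  + left; apply: gd M1 M2 => n r' Hr'; exact: Hint2.
  + right; split=> //; exists (inter_name B1 A2); split.
      apply: gd M1 F2; exact: finter_inter.
    move=> n r' Hr' HA /fin_inter [HB1 HA2]; apply/Hint2 => //; split=> //; exact: S2.
  + right; split=> //; exists (inter_name A1 B2); split.
      apply: gd F1 M2; exact: finter_inter.
    move=> n r' Hr' HA /fin_inter [HA1 HB2]; apply/Hint2 => //; split=> //; exact: S1.
  + right; split=> //; exists (inter_name A1 A2); split.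
      apply: gd F1 F2; exact: finter_inter.
    move=> n r' Hr' HA /fin_inter [HA1 HA2]; apply/Hint2 => //; split; [exact: S1|exact: S2].
- move=> qs Hqs; exact: fmem_incl incl (ge qs Hqs).
Qed.

Lemma Ext_A : D (fun _ => True) -> Ext A q.
Proof.
case: gDm => [ga _] HT; split; first exact: le_refl.
exists (check_name (fun _ => True)); split; first exact: ga.
by move=> n r' _ HA _.
Qed.

End Ext.


Hypothesis DT : D (fun _ => True).
Hypothesis DI : forall x y, D x -> D y -> D (fun n => x n /\ y n).
Hypothesis K : forall x, D x -> forall j (Qs : nat -> nat -> P),
  (forall l, (l < j)%N -> forall m, Q (Qs l m)) ->
  forall r, (forall l, (l < j)%N -> le r (lim (Qs l))) ->
  exists m, x m /\ exists r', le r' r /\ forall l, (l < j)%N -> le r' (Qs l m).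

Definition Dn0 : fname P := fun B r =>
  exists x, D x /\ exists j (Qs : nat -> nat -> P),
   (forall l, (l < j)%N -> forall m, Q (Qs l m)) /\
   (forall l, (l < j)%N -> le r (lim (Qs l))) /\
   forall n r', le r' r -> x n -> (forall l, (l < j)%N -> forces_in le (generic_hits (Qs l)) n r') ->
     forces_in le B n r'.

Lemma good_Dn0 : good Dn0.
Proof.
split; [|split; [|split; [|split]]].
- move=> x Hx p0; apply: (@fmem_of_pair _ _ p0); last exact: le_refl.
  exists x; split=> //; exists 0, (fun _ _ => p0); split=> //; split=> //.
  by move=> n r' _ Hxn _; apply/fin_check.
- move=> p0 H; case: (H p0 (le_refl p0)) => r [Hrp0 [B [a [[x [Hx [j [Qs [HQ [Hl Hs]]]]]] [Hra Heq]]]]].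
  have Hl' : forall l, (l < j)%N -> le r (lim (Qs l)) by move=> l Hlj; exact: le_trans Hra (Hl l Hlj).
  case: (K Hx HQ Hl') => m [Hxm [r' [Hr'r Hr'Q]]].
  apply: (@fin_false m r'); apply/(Heq m r' Hr'r); apply: Hs => //; first exact: le_trans Hr'r Hra.
  move=> l Hlj; apply: fin_hits; exact: Hr'Q.
- move=> B B2 p0 H Hsub; apply: fmem_dense => q0 Hq0.
  case: (H q0 Hq0) => r [Hrq0 [B' [a [[x [Hx [j [Qs [HQ [Hl Hs]]]]]] [Hra Heq]]]]].
  exists r; split=> //; apply: (@fmem_of_pair _ _ r); last exact: le_refl.
  exists x; split=> //; exists j, Qs; split=> //; split.
    by move=> l Hlj; exact: le_trans Hra (Hl l Hlj).
  move=> n r' Hr' Hxn Hh; apply: (Hsub n r'); first exact: le_trans Hr' (le_trans Hrq0 Hq0).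
  apply/(Heq n r' Hr'); apply: Hs => //; exact: le_trans Hr' Hra.
- move=> B1 B2 C p0 Hint H1 H2; apply: fmem_dense => q0 Hq0.
  case: (H1 q0 Hq0) => r1 [Hr1 [B1' [a1 [[x1 [Hx1 [j1 [Qs1 [HQ1 [Hl1 Hs1]]]]]] [Hra1 Heq1]]]]].
  case: (H2 r1 (le_trans Hr1 Hq0)) => r2 [Hr2 [B2' [a2 [[x2 [Hx2 [j2 [Qs2 [HQ2 [Hl2 Hs2]]]]]] [Hra2 Heq2]]]]].
  exists r2; split; first exact: le_trans Hr2 Hr1.
  apply: (@fmem_of_pair _ _ r2); last exact: le_refl.
  exists (fun n => x1 n /\ x2 n); split; first exact: DI.
  exists (j1 + j2), (fun l => if (l < j1)%N then Qs1 l else Qs2 (l - j1)); split; [|split].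
  + move=> l Hl m; case: ifP => Hlj1; first exact: HQ1.
    apply: HQ2; rewrite ltn_subLR //; by rewrite leqNgt Hlj1.
  + move=> l Hl; case: ifP => Hlj1.
      apply: le_trans (Hl1 l Hlj1); exact: le_trans Hr2 Hra1.
    apply: le_trans Hra2 (Hl2 _ _); rewrite ltn_subLR //; by rewrite leqNgt Hlj1.
  + move=> n r' Hr' [Hxn1 Hxn2] Hh.
    have Hr'p0 : le r' p0 by apply: le_trans Hr' (le_trans Hr2 (le_trans Hr1 Hq0)).
    apply/(Hint n r' Hr'p0); split.
    * apply/(Heq1 n r' (le_trans Hr' Hr2)); apply: Hs1 => //.
        exact: le_trans Hr' (le_trans Hr2 Hra1).
      move=> l Hlj; have := Hh l (ltn_addr _ Hlj); by rewrite Hlj.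
    * apply/(Heq2 n r' Hr'); apply: Hs2 => //; first exact: le_trans Hr' Hra2.
      move=> l Hlj; have Hjl : (j1 + l < j1 + j2)%N by rewrite ltn_add2l.
      have := Hh _ Hjl.
      by rewrite ltnNge leq_addr /= addKn.
- move=> qs Hqs; apply: (@fmem_of_pair _ _ (lim qs)); last exact: le_refl.
  exists (fun _ => True); split=> //; exists 1, (fun _ => qs); split; [|split].
  + by move=> l _ m; exact: Hqs.
  + by move=> l _; exact: le_refl.
  + by move=> n r' _ _ Hh; exact: Hh 0 isT.
Qed.


Definition GT := {Dn : fname P | good Dn}.
Definition Rg (s t : GT) : bool :=
  boolp.asbool (forall B a, proj1_sig s B a -> proj1_sig t B a).

Lemma Rg_P (s t : GT) : Rg s t <-> (forall B a, proj1_sig s B a -> proj1_sig t B a).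
Proof. split; [move/boolp.asboolP; done | move=> H; exact/boolp.asboolP]. Qed.

Lemma good_union (Ch : GT -> Prop) s0 :
  Ch s0 -> classical_sets.total_on Ch (fun x y => Rg x y) ->
  good (fun B a => exists s, Ch s /\ proj1_sig s B a).
Proof.
move=> Hs0 Htot.
set U := fun B a => exists s, Ch s /\ proj1_sig s B a.
have incl : forall s, Ch s -> forall B a, proj1_sig s B a -> U B a.
  by move=> s Hs B a H; exists s.
have Uw : forall B p0, forces_mem le U B p0 ->
    dense_below le (fun r => exists s, Ch s /\ forces_mem le (proj1_sig s) B r) p0.
  move=> B p0 H q0 Hq0; case: (H q0 Hq0) => r [Hr [B' [a [[s [Hs HB']] [Hra Heq]]]]].
  exists r; split=> //; exists s; split=> //; exact: fmem_witness HB' Hra Heq.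
have wU : forall B p0,
    dense_below le (fun r => exists s, Ch s /\ forces_mem le (proj1_sig s) B r) p0 ->
    forces_mem le U B p0.
  move=> B p0 H; apply: fmem_dense => q0 Hq0; case: (H q0 Hq0) => r [Hr [s [Hs Hm]]].
  exists r; split=> //; exact: fmem_incl (incl s Hs) Hm.
have g0 := proj2_sig s0.
split; [|split; [|split; [|split]]].
- move=> x Hx p0; exact: fmem_incl (incl s0 Hs0) (proj1 g0 x Hx p0).
- move=> p0 /Uw H; case: (H p0 (le_refl p0)) => r [_ [s [Hs Hm]]].
  exact: (proj1 (proj2 (proj2_sig s)) r Hm).
- move=> B B2 p0 /Uw H Hsub; apply: wU => q0 Hq0.
  case: (H q0 Hq0) => r [Hr [s [Hs Hm]]]; exists r; split=> //; exists s; split=> //.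
  apply: (proj1 (proj2 (proj2 (proj2_sig s)))) Hm _ => n r' Hr'.
  apply: Hsub; exact: le_trans Hr' (le_trans Hr Hq0).
- move=> B1 B2 C p0 Hint /Uw H1 /Uw H2; apply: wU => q0 Hq0.
  case: (H1 q0 Hq0) => r1 [Hr1 [s1 [Hs1 Hm1]]].
  case: (H2 r1 (le_trans Hr1 Hq0)) => r2 [Hr2 [s2 [Hs2 Hm2]]].
  have {}Hm1 := fmem_mono Hm1 Hr2.
  have Hint2 : forces_inter le C B1 B2 r2.
    move=> n r' Hr'; apply: Hint; exact: le_trans Hr' (le_trans Hr2 (le_trans Hr1 Hq0)).
  exists r2; split; first exact: le_trans Hr2 Hr1.
  case: (Htot s1 s2 Hs1 Hs2) => /Rg_P Hsub.
  + exists s2; split=> //; apply: (proj1 (proj2 (proj2 (proj2 (proj2_sig s2))))) Hint2 _ Hm2.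
    exact: fmem_incl Hsub Hm1.
  + exists s1; split=> //; apply: (proj1 (proj2 (proj2 (proj2 (proj2_sig s1))))) Hint2 Hm1 _.
    exact: fmem_incl Hsub Hm2.
- move=> qs Hqs; exact: fmem_incl (incl s0 Hs0) (proj2 (proj2 (proj2 (proj2 g0))) qs Hqs).
Qed.

Theorem abstract_main : exists Dn,
  forced_uf_extending le D Dn /\
  forall qs, (forall m, Q (qs m)) -> forces_mem le Dn (generic_hits qs) (lim qs).
Proof.
have t0 : GT := exist _ Dn0 good_Dn0.
have R1 : forall s, Rg s s by move=> s; apply/Rg_P.
have R2 : forall r s t, Rg r s -> Rg s t -> Rg r t.
  move=> r s t /Rg_P H1 /Rg_P H2; apply/Rg_P => B a Hb; exact: H2 (H1 B a Hb).
have R3 : forall Ch : classical_sets.set GT, classical_sets.total_on Ch (fun x y => Rg x y) ->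
    exists t, forall s, Ch s -> Rg s t.
  move=> Ch Htot.
  case: (boolp.pselect (exists s, Ch s)) => [[s0 Hs0]|Hne].
  + exists (exist _ _ (good_union Hs0 Htot)) => s Hs; apply/Rg_P => B a HB /=.
    by exists s.
  + exists t0 => s Hs; exfalso; apply: Hne; by exists s.
case: (@classical_sets.ZL_preorder GT t0 Rg R1 R2 R3) => t Ht.
case: t Ht => Dm gDm Hmax.
case: (gDm) => [ga [gb [gc [gd ge]]]].
exists Dm; split; last exact: ge.
split=> //; split=> //; split=> //; split=> //.
move=> A C p HC q Hqp.
apply: boolp.contrapT => Hno.
have Hno' : forall r, le r q -> ~ (forces_mem le Dm A r \/ forces_mem le Dm C r).
  move=> r Hrq HH; apply: Hno; exists r; split=> //.
have g' := good_Dm' gDm HC Hqp Hno'.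
have := Hmax (exist _ _ g'); rewrite /= => H.
have H' := H (proj2 (Rg_P (exist _ Dm gDm) (exist _ _ g')) (fun B a HB => or_introl HB)).
have HDm : Dm A q.
  apply: (proj1 (Rg_P _ _) H' A q); right; exact: Ext_A.
apply: (Hno' q (le_refl q)); left; exact: fmem_of_pair HDm (le_refl q).
Qed.

End Abs.
Local Open Scope fset_scope.

Lemma prefix_nth (s t : seq nat) i : prefix s t -> (i < size s)%N -> nth 0%N t i = nth 0%N s i.
Proof. by move/prefixP=> [u ->] H; rewrite nth_cat H. Qed.

Lemma E_refl p : E_le p p.
Proof.
split; first exact: prefix_refl.
split=> //; split=> [i|i /andP[H1 H2]]; first exact: fsubset_refl.
by rewrite ltnNge H1 in H2.
Qed.

Lemma E_trans p q r : E_le p q -> E_le q r -> E_le p r.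
Proof.
move=> [Hp1 [Hp2 [Hp3 Hp4]]] [Hq1 [Hq2 [Hq3 Hq4]]].
split; first exact: (@prefix_trans _ (E_s q)).
split; first exact: leq_trans Hq2 Hp2.
split; first by move=> i; exact: fsubset_trans (Hq3 i) (Hp3 i).
move=> i /andP[H1 H2].
case: (ltnP i (size (E_s q))) => H3.
- rewrite (prefix_nth Hp1 H3); apply: Hq4; by rewrite H1 H3.
- have := Hp4 i; rewrite H3 H2 => /(_ isT) Hn.
  apply/negP => Hin; move/negP: Hn; apply; exact: (fsubsetP (Hq3 i)).
Qed.

Definition QE (c : nat) (p : Econd) : Prop := choice.pickle (E_s p, E_k p) = c.

Lemma QE_eq c p p' : QE c p -> QE c p' -> E_s p = E_s p' /\ E_k p = E_k p'.
Proof.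
rewrite /QE => H1 H2; rewrite -H2 in H1.
by have [-> ->] := pcan_inj (@choice.pickleK _) H1.
Qed.

Fixpoint bigU (G : nat -> Econd) (j : nat) (i : nat) : {fset nat} :=
  match j with 0 => fset0 | j'.+1 => bigU G j' i `|` E_phi (G j') i end.
Fixpoint sumk (G : nat -> Econd) (j : nat) : nat :=
  match j with 0 => 0 | j'.+1 => sumk G j' + E_k (G j') end.

Lemma card_U (A B : {fset nat}) : (#|` A `|` B| <= #|` A| + #|` B|)%N.
Proof. rewrite cardfsU; exact: leq_subr. Qed.

Lemma card_bigU G j i : (#|` bigU G j i| <= sumk G j)%N.
Proof.
elim: j => [|j IH]; first by rewrite /bigU cardfs0.
rewrite /=.
apply: leq_trans (card_U _ _) _; apply: leq_add => //; exact: E_phiP.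
Qed.

Lemma sub_bigU G j i l : (l < j)%N -> E_phi (G l) i `<=` bigU G j i.
Proof.
elim: j => [|j IH] //= Hl; rewrite ltnS leq_eqVlt in Hl.
case/orP: Hl => [/eqP ->|Hl]; first exact: fsubsetUr.
apply: fsubset_trans (IH Hl) _; exact: fsubsetUl.
Qed.

Lemma le_sumk G j l : (l < j)%N -> (E_k (G l) <= sumk G j)%N.
Proof.
elim: j => [|j IH] //= Hl; rewrite ltnS leq_eqVlt in Hl.
case/orP: Hl => [/eqP ->|Hl]; first exact: leq_addl.
apply: leq_trans (IH Hl) _; exact: leq_addr.
Qed.

Lemma amalg_proof r G j i :
  (#|` E_phi r i `|` bigU G j i| <= E_k r + sumk G j)%N.
Proof. apply: leq_trans (card_U _ _) _; apply: leq_add; [exact: E_phiP|exact: card_bigU]. Qed.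

Definition amalg r G j : Econd :=
  @MkE (E_s r) (E_k r + sumk G j) (fun i => E_phi r i `|` bigU G j i) (@amalg_proof r G j).

Lemma amalg_le_r r G j : E_le (amalg r G j) r.
Proof.
split; first exact: prefix_refl.
split; first exact: leq_addr.
split=> [i|i /andP[H1 H2]]; first exact: fsubsetUl.
by rewrite /= ltnNge H1 in H2.
Qed.

Lemma amalg_le_G r G j l : (l < j)%N -> prefix (E_s (G l)) (E_s r) ->
  (forall i, (size (E_s (G l)) <= i < size (E_s r))%N -> nth 0%N (E_s r) i \notin E_phi (G l) i) ->
  E_le (amalg r G j) (G l).
Proof.
move=> Hl Hp Hn; split=> //; split; first by apply: leq_trans (le_sumk G Hl) _; exact: leq_addl.
split=> // i; apply: fsubset_trans (sub_bigU G i Hl) _; exact: fsubsetUr.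
Qed.

Lemma fin_collect (S : nat -> Prop) c :
  (forall l : seq nat, uniq l -> (forall j, j \in l -> S j) -> (size l <= c)%N) ->
  exists F : {fset nat}, (#|` F| <= c)%N /\ forall j, S j -> j \in F.
Proof.
elim: c S => [|c IH] S H.
- exists fset0; split; first by rewrite cardfs0.
  move=> j Sj; have := H [:: j] isT; rewrite /=; move=> /(_ _) H'.
  suff : (1 <= 0)%N by []. apply: H' => k; rewrite inE => /eqP ->; exact: Sj.
- case: (boolp.pselect (exists j, S j)) => [[j0 Sj0]|Hne]; last first.
    exists fset0; split; first by rewrite cardfs0.
    move=> j Sj; exfalso; apply: Hne; by exists j.
  have HS : forall l : seq nat, uniq l -> (forall j, j \in l -> S j /\ j <> j0) -> (size l <= c)%N.
    move=> l Hu Hl.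
    have Hj0 : j0 \notin l by apply/negP => /Hl [_ []].
    have := H (j0 :: l); rewrite /= Hj0 Hu => /(_ isT) H'.
    rewrite -ltnS; apply: H' => j; rewrite inE => /orP[/eqP -> //|/Hl [] //].
  have [F [HF1 HF2]] := IH (fun j => S j /\ j <> j0) HS.
  exists (j0 |` F); split.
    rewrite cardfsU1; case: (j0 \notin F) => /=; by [rewrite add1n ltnS|exact: leq_trans HF1 _].
  move=> j Sj; rewrite !inE; case: (boolp.pselect (j = j0)) => [->|Hj]; first by rewrite eqxx.
  apply/orP; right; exact: HF2.
Qed.

Section UF.
Variable D : (nat -> Prop) -> Prop.
Hypothesis HD : ultrafilter D.

Lemma D_T : D (fun _ => True). Proof. by case: HD. Qed.
Lemma D_up x y : D x -> (forall n, x n -> y n) -> D y.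
Proof. move: (HD) => [_ [_ [H _]]]; exact: H. Qed.
Lemma D_I x y : D x -> D y -> D (fun n => x n /\ y n).
Proof. move: (HD) => [_ [_ [_ [H _]]]]; exact: H. Qed.
Lemma D_ne x : D x -> exists m, x m.
Proof.
move=> Hx; apply: boolp.contrapT => Hn; move: (HD) => [_ [HF _]]; apply: HF.
exact: (D_up Hx (fun n xn => Hn (ex_intro _ n xn))).
Qed.
Lemma D_compl x : ~ D x -> D (fun n => ~ x n).
Proof. move: (HD) => [_ [_ [_ [_ H]]]] Hx; by case: (H x). Qed.

Lemma D_fin (X : nat -> nat -> Prop) N :
  (forall a, (a < N)%N -> D (X a)) -> D (fun m => forall a, (a < N)%N -> X a m).
Proof.
elim: N => [|N IH] H.
- apply: (D_up D_T) => n _ a; by rewrite ltn0.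
- have H1 := IH (fun a Ha => H a (ltnW Ha)).
  apply: (D_up (D_I H1 (H N (ltnSn N)))) => m [Hm1 Hm2] a; rewrite ltnS leq_eqVlt.
  by case/orP => [/eqP ->|Ha] //; exact: Hm1.
Qed.

Definition limprop (qs : nat -> Econd) (i : nat) (F : {fset nat}) :=
  (#|` F| <= E_k (qs 0))%N /\ forall j, j \notin F -> D (fun m => j \notin E_phi (qs m) i).

Definition limset (qs : nat -> Econd) (i : nat) : {fset nat} :=
  match boolp.pselect (exists F, limprop qs i F) with
  | left h => proj1_sig (boolp.cid h)
  | right _ => fset0
  end.

Lemma limset_card qs i : (#|` limset qs i| <= E_k (qs 0))%N.
Proof.
rewrite /limset; case: (boolp.pselect _) => [h|_]; last by rewrite cardfs0.
exact: (proj1 (proj2_sig (boolp.cid h))).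
Qed.

Lemma limset_ex qs i : (forall m, E_k (qs m) = E_k (qs 0)) -> exists F, limprop qs i F.
Proof.
move=> Hk.
have HS : forall l : seq nat, uniq l -> (forall j, j \in l -> D (fun m => j \in E_phi (qs m) i)) ->
    (size l <= E_k (qs 0))%N.
  move=> l Hu Hl.
  have HX : forall a, (a < size l)%N -> D (fun m => nth 0%N l a \in E_phi (qs m) i).
    move=> a Ha; apply: Hl; exact: mem_nth.
  have [m Hm] := D_ne (D_fin HX).
  rewrite -(Hk m); apply: leq_trans (E_phiP (qs m) i).
  apply: (uniq_leq_size Hu) => j Hj; have := Hm (index j l); rewrite index_mem Hj nth_index //.
  by move=> /(_ isT).
have [F [HF1 HF2]] := @fin_collect (fun j => D (fun m => j \in E_phi (qs m) i)) (E_k (qs 0)) HS.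
exists F; split=> // j Hj.
have HnD : ~ D (fun m => j \in E_phi (qs m) i).
  by move=> HH; move: Hj; rewrite (HF2 j HH).
apply: (D_up (D_compl HnD)) => m Hm; by apply/negP.
Qed.

Lemma limset_prop qs i : (forall m, E_k (qs m) = E_k (qs 0)) ->
  forall j, j \notin limset qs i -> D (fun m => j \notin E_phi (qs m) i).
Proof.
move=> Hk; rewrite /limset; case: (boolp.pselect _) => [h|Hn]; last first.
  by exfalso; apply: Hn; exact: limset_ex.
exact: (proj2 (proj2_sig (boolp.cid h))).
Qed.

Definition limE (qs : nat -> Econd) : Econd :=
  @MkE (E_s (qs 0)) (E_k (qs 0)) (limset qs) (limset_card qs).

End UF.

Lemma K_E D (HD : ultrafilter D) c : forall x, D x -> forall j (Qs : nat -> nat -> Econd),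
  (forall l, (l < j)%N -> forall m, QE c (Qs l m)) ->
  forall r, (forall l, (l < j)%N -> E_le r (limE D (Qs l))) ->
  exists m, x m /\ exists r', E_le r' r /\ forall l, (l < j)%N -> E_le r' (Qs l m).
Proof.
move=> x Hx j Qs HQ r Hr.
have Hs : forall l m, (l < j)%N -> E_s (Qs l m) = E_s (Qs l 0) /\ E_k (Qs l m) = E_k (Qs l 0).
  move=> l m Hl; exact: QE_eq (HQ l Hl m) (HQ l Hl 0).
have HX : forall l, (l < j)%N -> D (fun m => forall i, (i < size (E_s r))%N ->
    (size (E_s (Qs l 0)) <= i)%N -> nth 0%N (E_s r) i \notin E_phi (Qs l m) i).
  move=> l Hl.
  apply: (D_fin HD (X := fun i m => (size (E_s (Qs l 0)) <= i)%N -> nth 0%N (E_s r) i \notin E_phi (Qs l m) i)).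
  move=> i Hi.
  case: (leqP (size (E_s (Qs l 0))) i) => Hi2.
  - have [_ [_ [_ H4]]] := Hr l Hl.
    have Hn : nth 0%N (E_s r) i \notin limset D (Qs l) i.
      by apply: H4; rewrite /= Hi2 Hi.
    have Hk : forall m, E_k (Qs l m) = E_k (Qs l 0) by move=> m; case: (Hs l m Hl).
    apply: (D_up HD (limset_prop HD Hk Hn)) => m Hm _; exact: Hm.
  - by apply: (D_up HD (D_T HD)) => m _.
have HY := D_I HD Hx (D_fin HD HX).
have [m [Hxm Hm]] := D_ne HD HY.
exists m; split=> //; exists (amalg r (fun l => Qs l m) j); split; first exact: amalg_le_r.
move=> l Hl; have [Hs1 _] := Hs l m Hl.
have [Hp _] := Hr l Hl.
apply: (amalg_le_G (G := fun l => Qs l m)) => //=; rewrite Hs1 //.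
move=> i /andP [Hi1 Hi2]; exact: Hm l Hl i Hi2 Hi1.
Qed.

Lemma base_proof (i : nat) : (#|` (fset0 : {fset nat})| <= 0)%N.
Proof. by rewrite cardfs0. Qed.

Lemma centered_E c : centered E_le (QE c).
Proof.
move=> n F HF.
pose base := @MkE (E_s (F 0)) 0 (fun _ => fset0) base_proof.
exists (amalg base F n) => i Hi.
have H0 : (0 < n)%N by apply: leq_ltn_trans Hi.
have [Hs _] := QE_eq (HF i Hi) (HF 0 H0).
apply: amalg_le_G => //=; rewrite Hs; first exact: prefix_refl.
move=> i' /andP [H1 H2]; by rewrite ltnNge H1 in H2.
Qed.

Theorem corollary3p29 :
  exists Q : nat -> Econd -> Prop,
    (forall p : Econd, exists n, Q n p) /\
    (forall n, centered E_le (Q n) /\ closed_uf_lim_linked E_le (Q n)).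
Proof.
exists QE; split.
  by move=> p; exists (choice.pickle (E_s p, E_k p)).
move=> c; split; first exact: centered_E.
move=> D [HD _].
have [Dn [H1 H2]] := @abstract_main _ _ E_refl E_trans D (QE c) (limE D)
  (D_T HD) (D_I HD) (@K_E D HD c).
exists (limE D), Dn; split; last by split.
move=> qs Hqs; exact: Hqs 0.
Qed.
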